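(* Let $k\in\mathbb{R}_{\ge 0}$ and let $G$ be a graph on $n\ge 2$ vertices such that every subgraph $H\subseteq G$ with $|V(H)|\ge 3$ satisfies $|E(H)|\le k(|V(H)|-2)$. If $G$ admits an interval colouring, then $t(G)\le \frac{k}{2}n+1-k$.
   Context: An interval colouring of a graph $G$ is a proper edge-colouring $c\colon E(G)\to\mathbb{N}$ such that for every vertex $v$, the set of colours on edges incident to $v$ is a set of consecutive integers. For an interval colourable graph $G$, $t(G)$ denotes the greatest number of distinct colours used in an interval colouring of $G$. *)

(* Defs.v *)
From mathcomp Require Import all_boot all_order all_algebra.
From mathcomp Require Export reals.
Set Implicit Arguments. Unset Strict Implicit. Unset Printing Implicit Defensive.

Definition simple_graph (T : finType) (g : rel T) : Prop :=
  irreflexive g /\ symmetric g.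

Definition edges (T : finType) (g : rel T) : {set {set T}} :=
  [set e : {set T} | [exists x, exists y, (x != y) && g x y && (e == [set x; y])]].

(* Proper edge colouring with colours in nat (only values on edges matter). *)
Definition proper_edge_colouring (T : finType) (g : rel T) (c : {set T} -> nat) : Prop :=
  forall e f, e \in edges g -> f \in edges g -> e != f -> ~~ [disjoint e & f] ->
    c e != c f.

Definition colours_at (T : finType) (g : rel T) (c : {set T} -> nat) (v : T) : seq nat :=
  [seq c e | e <- enum (edges g) & v \in (e : {set T})].

Definition consecutive (s : seq nat) : Prop :=
  forall a b m, a \in s -> b \in s -> a <= m -> m <= b -> m \in s.

Definition interval_colouring (T : finType) (g : rel T) (c : {set T} -> nat) : Prop :=
  proper_edge_colouring g c /\ forall v, consecutive (colours_at g c v).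

Definition num_colours (T : finType) (g : rel T) (c : {set T} -> nat) : nat :=
  size (undup [seq c e | e <- enum (edges g)]).

(* Main.v *)
Require Import Defs.
From mathcomp Require Import all_boot all_order all_algebra.
From mathcomp Require Import reals.
From mathcomp Require Import zify ring lra.
Import Order.TTheory GRing.Theory Num.Theory.
Set Implicit Arguments. Unset Strict Implicit. Unset Printing Implicit Defensive.

Definition Bnd (T : finType) (g : rel T) (c : {set T} -> nat) : nat :=
  (\max_(e in edges g) c e).+1.

Lemma c_lt (T : finType) (g : rel T) (c : {set T} -> nat) e :
  e \in edges g -> c e < Bnd g c.
Proof. by move=> He; rewrite ltnS; apply: (leq_bigmax_cond (F := c)). Qed.

Definition col (T : finType) (g : rel T) (c : {set T} -> nat) (e : {set T}) : 'I_(Bnd g c) :=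
  inord (c e).

Lemma col_val (T : finType) (g : rel T) (c : {set T} -> nat) e :
  e \in edges g -> (col g c e : nat) = c e.
Proof. by move=> He; rewrite /col inordK // c_lt. Qed.

Definition Cs (T : finType) (g : rel T) (c : {set T} -> nat) (p q : nat) : {set 'I_(Bnd g c)} :=
  [set i | [exists e in edges g, col g c e == i] && (p <= i <= q)].
Definition Ex (T : finType) (g : rel T) (c : {set T} -> nat) (i : 'I_(Bnd g c)) :=
  [set e in edges g | col g c e == i].
Definition Ew (T : finType) (g : rel T) (c : {set T} -> nat) (p q : nat) :=
  [set e in edges g | p <= c e <= q].
Definition Vw (T : finType) (g : rel T) (c : {set T} -> nat) (p q : nat) : {set T} :=
  [set v | [exists e in Ew g c p q, v \in e]].

Lemma edgeP (T : finType) (g : rel T) e :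
  e \in edges g -> exists x y, [/\ x != y & e = [set x; y]].
Proof.
rewrite inE => /existsP [x /existsP [y /andP [/andP [Hxy _] /eqP ->]]].
by exists x, y.
Qed.

Lemma edge_card (T : finType) (g : rel T) e : e \in edges g -> #|e| = 2.
Proof. by case/edgeP => x [y [Hxy ->]]; rewrite cards2 Hxy. Qed.

Lemma colE (T : finType) (g : rel T) (c : {set T} -> nat) e (i : 'I_(Bnd g c)) :
  e \in edges g -> (col g c e == i) = (c e == i).
Proof. by move=> He; rewrite -val_eqE /= col_val. Qed.

Lemma interval_mid (T : finType) (g : rel T) (c : {set T} -> nat) v e1 e2 m :
  interval_colouring g c -> e1 \in edges g -> e2 \in edges g -> v \in e1 -> v \in e2 ->
  c e1 <= m -> m <= c e2 -> exists2 e, e \in edges g & (v \in e) && (c e == m).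
Proof.
move=> [_ Hc] E1 E2 V1 V2 L1 L2.
have M : forall e, e \in edges g -> v \in e -> c e \in colours_at g c v.
  by move=> e E V; apply/mapP; exists e => //; rewrite mem_filter V mem_enum.
have := Hc v _ _ _ (M _ E1 V1) (M _ E2 V2) L1 L2.
case/mapP => e; rewrite mem_filter mem_enum => /andP [V E] ->.
by exists e => //; rewrite V eqxx.
Qed.

Lemma win_split p q x i : p <= x -> x <= q -> (p <= i <= q) = (p <= i <= x) || (x <= i <= q).
Proof.
move=> H1 H2.
apply/idP/idP; [move=> /andP[? ?]; apply/orP| case/orP => /andP[? ?]; apply/andP]; try (split; lia).
case: (leqP i x) => ?; [left|right]; apply/andP; split; lia.
Qed.

Lemma Ew_inE (T : finType) (g : rel T) (c : {set T} -> nat) p q e :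
  (e \in Ew g c p q) = (e \in edges g) && (p <= c e <= q).
Proof. by rewrite inE. Qed.
Lemma Ex_inE (T : finType) (g : rel T) (c : {set T} -> nat) (i : 'I_(Bnd g c)) e :
  (e \in Ex i) = (e \in edges g) && (col g c e == i).
Proof. by rewrite inE. Qed.
Lemma Vw_inE (T : finType) (g : rel T) (c : {set T} -> nat) p q v :
  (v \in Vw g c p q) = [exists e in Ew g c p q, v \in e].
Proof. by rewrite inE. Qed.

Lemma Cs_U (T : finType) (g : rel T) (c : {set T} -> nat) p q (x : nat) :
  p <= x <= q -> Cs g c p q = Cs g c p x :|: Cs g c x q.
Proof.
move=> /andP [px xq]; apply/setP => i; rewrite !inE (win_split i px xq).
by rewrite andb_orr.
Qed.

Lemma Cs_I (T : finType) (g : rel T) (c : {set T} -> nat) p q (x : 'I_(Bnd g c)) :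
  x \in Cs g c p q -> Cs g c p x :&: Cs g c x q = [set x].
Proof.
rewrite inE => /andP [Ux /andP [px xq]]; apply/setP => i; rewrite !inE.
case: (eqVneq i x) => [->|Hne]; first by rewrite Ux px xq leqnn.
apply/negbTE; apply/negP => /andP [/andP [_ /andP [_ H1]] /andP [_ /andP [H2 _]]].
by move: Hne; rewrite -val_eqE /= eqn_leq H1 H2.
Qed.

Lemma Vw_U (T : finType) (g : rel T) (c : {set T} -> nat) p q (x : nat) :
  p <= x <= q -> Vw g c p q = Vw g c p x :|: Vw g c x q.
Proof.
move=> /andP [px xq]; apply/setP => v; rewrite !inE.
apply/idP/idP.
- case/existsP => e /andP [He Ve]; move: He; rewrite inE => /andP [E /andP [pe eq]].
  case: (leqP (c e) x) => Hx.
  + apply/orP; left; apply/existsP; exists e; rewrite Ve inE E pe Hx //.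
  + apply/orP; right; apply/existsP; exists e; rewrite Ve inE E eq (ltnW Hx) //.
- case/orP => /existsP [e /andP [He Ve]]; apply/existsP; exists e; rewrite Ve andbT;
  move: He; rewrite !inE => /andP [-> /andP [H1 H2]] /=.
  + by rewrite H1 (leq_trans H2 xq).
  + by rewrite H2 (leq_trans px H1).
Qed.

Lemma Vw_I (T : finType) (g : rel T) (c : {set T} -> nat) p q (x : 'I_(Bnd g c)) e0 :
  interval_colouring g c -> x \in Cs g c p q -> Ex x = [set e0] ->
  Vw g c p x :&: Vw g c x q = e0.
Proof.
move=> Hic; rewrite inE => /andP [Ux /andP [px xq]] Hx.
have E0 : e0 \in Ex x by rewrite Hx set11.
move: (E0); rewrite Ex_inE => /andP [E0e /eqP C0].
have c0 : c e0 = x by rewrite -C0 col_val.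
apply/setP => v; rewrite !inE -!Vw_inE !Vw_inE; apply/idP/idP.
- case/andP => /existsP [e1 /andP [H1 V1]] /existsP [e2 /andP [H2 V2]].
  move: H1 H2; rewrite !Ew_inE => /andP [E1 /andP [_ L1]] /andP [E2 /andP [L2 _]].
  have [e Ee /andP [Ve /eqP Ce]] := interval_mid Hic E1 E2 V1 V2 L1 L2.
  have : e \in Ex x.
    by rewrite Ex_inE Ee /= colE // Ce.
  by rewrite Hx inE => /eqP Hee; rewrite -Hee.
- move=> Ve; apply/andP; split; apply/existsP; exists e0; rewrite Ve Ew_inE E0e c0 leqnn //=.
  + by rewrite px.
  + by rewrite xq.
Qed.

Lemma Cs_mem (T : finType) (g : rel T) (c : {set T} -> nat) p q (i : 'I_(Bnd g c)) :
  i \in Cs g c p q -> exists2 e, e \in Ew g c p q & e \in Ex i.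
Proof.
rewrite inE => /andP [/existsP [e /andP [E /eqP Ce]] Hw].
exists e; first by rewrite Ew_inE E /= -(col_val c E) Ce.
by rewrite Ex_inE E Ce eqxx.
Qed.

Lemma Ew_sub (T : finType) (g : rel T) (c : {set T} -> nat) p q e :
  e \in Ew g c p q -> e \subset Vw g c p q.
Proof.
move=> He; apply/subsetP => v Ve; rewrite Vw_inE; apply/existsP; exists e.
by rewrite He Ve.
Qed.

Lemma Vw_ge2 (T : finType) (g : rel T) (c : {set T} -> nat) p q :
  0 < #|Cs g c p q| -> 2 <= #|Vw g c p q|.
Proof.
case/card_gt0P => i /Cs_mem [e He _].
have E : e \in edges g by move: He; rewrite Ew_inE => /andP [].
by rewrite -(edge_card E); apply: subset_leq_card; apply: Ew_sub He.
Qed.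

Lemma two_edges (T : finType) (g : rel T) e1 e2 :
  e1 \in edges g -> e2 \in edges g -> e1 != e2 -> 3 <= #|e1 :|: e2|.
Proof.
move=> E1 E2 Hne.
have := cardsUI e1 e2; rewrite (edge_card E1) (edge_card E2).
case: (leqP 3 #|e1 :|: e2|) => // HU Heq.
have HI : 2 <= #|e1 :&: e2| by lia.
have Q1 : e1 :&: e2 = e1.
  apply/eqP; rewrite eqEcard subsetIl (edge_card E1) HI //.
have S12 : e1 \subset e2 by rewrite -Q1 subsetIr.
move: Hne; suff -> : e1 = e2 by rewrite eqxx.
by apply/eqP; rewrite eqEcard S12 (edge_card E1) (edge_card E2).
Qed.

Lemma Vw_ge3 (T : finType) (g : rel T) (c : {set T} -> nat) p q :
  1 < #|Cs g c p q| -> 3 <= #|Vw g c p q|.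
Proof.
case/card_gt1P => i [j [Hi Hj Hij]].
case: (Cs_mem Hi) => e1 W1; rewrite Ex_inE => /andP [E1 /eqP C1].
case: (Cs_mem Hj) => e2 W2; rewrite Ex_inE => /andP [E2 /eqP C2].
have Hne : e1 != e2 by apply: contraNneq Hij => H; rewrite -C1 -C2 H.
apply: leq_trans (two_edges E1 E2 Hne) _; apply: subset_leq_card.
by rewrite subUset !Ew_sub.
Qed.

Lemma Ew_sum (T : finType) (g : rel T) (c : {set T} -> nat) p q :
  #|Ew g c p q| = \sum_(i in Cs g c p q) #|Ex i|.
Proof.
rewrite -sum1_card (partition_big (col g c) (mem (Cs g c p q))) /=; last first.
  move=> e; rewrite Ew_inE => /andP [E Hw]; rewrite inE (col_val c E) Hw andbT.
  by apply/existsP; exists e; rewrite E eqxx.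
apply: eq_bigr => i Hi; rewrite sum1dep_card; apply: eq_card => e.
rewrite inE Ew_inE Ex_inE; apply/idP/idP.
- by case/andP => /andP [-> _] ->.
- case/andP => E /eqP Ce; rewrite E Ce eqxx andbT /=.
  by move: Hi; rewrite inE -Ce (col_val c E) => /andP [].
Qed.

Lemma sum_eq1 (I : finType) (A : pred I) (a : I) :
  a \in A -> \sum_(i in A) ((i == a) : nat) = 1.
Proof.
move=> Ha; rewrite (bigD1 a) //= eqxx big1 // => i /andP [_ /negbTE ->] //.
Qed.

Lemma nonsplit_count (T : finType) (g : rel T) (c : {set T} -> nat) p q :
  1 < #|Cs g c p q| ->
  ~~ [exists x in Cs g c p q, (#|Ex x| == 1) && [exists y in Cs g c p q, y < x]
        && [exists z in Cs g c p q, x < z]] ->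
  2 * (#|Cs g c p q| - 1) <= #|Ew g c p q|.
Proof.
move=> Hgt Hns.
have [x0 Hx0] : exists x0, x0 \in Cs g c p q.
  by apply/card_gt0P; apply: ltnW.
pose lo := [arg min_(i < x0 in Cs g c p q) (i : nat)].
pose hi := [arg max_(i > x0 in Cs g c p q) (i : nat)].
have [Hlo Llo] : lo \in Cs g c p q /\ forall j, j \in Cs g c p q -> lo <= j.
  by rewrite /lo; case: arg_minnP => // i Hi Hm; split.
have [Hhi Lhi] : hi \in Cs g c p q /\ forall j, j \in Cs g c p q -> j <= hi.
  by rewrite /hi; case: arg_maxnP => // i Hi Hm; split.
have Hterm : forall i, i \in Cs g c p q -> 2 <= #|Ex i| + (i == lo) + (i == hi).
  move=> i Hi.
  have H1 : 0 < #|Ex i| by case: (Cs_mem Hi) => e _ He; apply/card_gt0P; exists e.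
  case: (eqVneq i lo) => [_|Hl]; first by lia.
  case: (eqVneq i hi) => [_|Hh]; first by lia.
  rewrite !addn0; case: (leqP 2 #|Ex i|) => // H2.
  have Hone : #|Ex i| == 1 by lia.
  case/negP: Hns; apply/existsP; exists i; rewrite Hi Hone /=.
  apply/andP; split; [apply/existsP; exists lo | apply/existsP; exists hi].
  - rewrite Hlo /= ltn_neqAle Llo // andbT.
    by apply: contra_neq Hl => /val_inj ->.
  - rewrite Hhi /= ltn_neqAle Lhi // andbT.
    by apply: contra_neq Hh => /val_inj ->.
have Hs : \sum_(i in Cs g c p q) 2 <= \sum_(i in Cs g c p q) (#|Ex i| + (i == lo) + (i == hi)).
  by apply: leq_sum.
move: Hs; rewrite !big_split /= sum_nat_const (sum_eq1 Hlo) (sum_eq1 Hhi).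
rewrite -Ew_sum => H.
have HH : 2 * (#|Cs g c p q| - 1) = #|Cs g c p q| * 2 - 2 by rewrite mulnC mulnBl.
rewrite HH leq_subLR; move: H; rewrite addn1 addn1 addnC addn2; exact.
Qed.

Definition good (R : realType) (k : R) (T : finType) (g : rel T) (c : {set T} -> nat) p q :=
  0 < #|Cs g c p q| ->
  (2 * (#|Cs g c p q|%:R - 1) <= k * (#|Vw g c p q|%:R - 2) :> R)%R.

Lemma step (R : realType) (k : R) (T : finType) (g : rel T) (c : {set T} -> nat) p q :
  (0 <= k)%R ->
  (forall (S : {set T}) (F : {set {set T}}),
      F \subset edges g -> (forall e, e \in F -> e \subset S) ->
      (3 <= #|S|)%N -> (#|F|%:R : R) <= k * (#|S|%:R - 2))%R ->
  interval_colouring g c ->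
  (forall p' q', q' - p' < q - p -> good k g c p' q') ->
  good k g c p q.
Proof.
move=> k0 Hd Hic IH Ht.
case: (leqP #|Cs g c p q| 1) => Hle.
  have -> : #|Cs g c p q| = 1 by apply/eqP; rewrite eqn_leq Hle Ht.
  rewrite subrr mulr0; apply: mulr_ge0 => //.
  by rewrite subr_ge0 (ler_nat R 2) Vw_ge2.
case: (boolP [exists x in Cs g c p q, (#|Ex x| == 1) && [exists y in Cs g c p q, y < x]
        && [exists z in Cs g c p q, x < z]]) => Hs; last first.
  have H1 := nonsplit_count Hle Hs.
  have H2 := Hd (Vw g c p q) (Ew g c p q).
  have H3 : ((#|Ew g c p q|%:R : R) <= k * (#|Vw g c p q|%:R - 2))%R.
    apply: H2; last exact: Vw_ge3.
    - by apply/subsetP => e; rewrite Ew_inE => /andP [].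
    - by move=> e; apply: Ew_sub.
  apply: le_trans H3; rewrite -(ler_nat R) in H1; apply: le_trans H1.
  by rewrite natrM natrB ?(ltnW Hle).
case/existsP: Hs => x /andP [Hx /andP [/andP [H1 /existsP [y /andP [Hy Hyx]]] /existsP [z /andP [Hz Hxz]]]].
case/cards1P: H1 => e0 He0.
have Hxb := Hx; move: Hxb; rewrite inE => /andP [_ /andP [px xq]].
have py : p <= y by move: Hy; rewrite inE => /andP [_ /andP []].
have zq : z <= q by move: Hz; rewrite inE => /andP [_ /andP []].
have HL := IH p x ltac:(lia).
have HR := IH x q ltac:(lia).
have HxL : x \in Cs g c p x.
  by move: Hx; rewrite !inE => /andP [-> /andP [-> _]]; rewrite leqnn.
have HxR : x \in Cs g c x q.
  by move: Hx; rewrite !inE => /andP [-> /andP [_ ->]]; rewrite leqnn.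
have HL' := HL ltac:(by apply/card_gt0P; exists x).
have HR' := HR ltac:(by apply/card_gt0P; exists x).
have Ct : #|Cs g c p q| + 1 = #|Cs g c p x| + #|Cs g c x q|.
  by rewrite -cardsUI -Cs_U ?px // (Cs_I Hx) cards1.
have E0 : e0 \in edges g.
  have : e0 \in Ex x by rewrite He0 set11.
  by rewrite Ex_inE => /andP [].
have Cn : #|Vw g c p q| + 2 = #|Vw g c p x| + #|Vw g c x q|.
  by rewrite -cardsUI -Vw_U ?px // (Vw_I Hic Hx He0) (edge_card E0).
have Ct' : (#|Cs g c p q|%:R = #|Cs g c p x|%:R + #|Cs g c x q|%:R - 1 :> R)%R.
  by rewrite -natrD -Ct natrD addrK.
have Cn' : (#|Vw g c p q|%:R = #|Vw g c p x|%:R + #|Vw g c x q|%:R - 2 :> R)%R.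
  by rewrite -natrD -Cn natrD addrK.
rewrite Ct' Cn'.
move: HL' HR'.
set a := (#|Cs g c p x|%:R : R)%R; set b := (#|Cs g c x q|%:R : R)%R.
set u := (#|Vw g c p x|%:R : R)%R; set v := (#|Vw g c x q|%:R : R)%R.
move=> HL' HR'.
have -> : (a + b - 1 - 1 = (a - 1) + (b - 1))%R by ring.
have -> : (u + v - 2 - 2 = (u - 2) + (v - 2))%R by ring.
by rewrite (mulrDr 2%R (a - 1)%R) (mulrDr k (u - 2)%R); apply: lerD.
Qed.

Lemma main_ind (R : realType) (k : R) (T : finType) (g : rel T) (c : {set T} -> nat) :
  (0 <= k)%R ->
  (forall (S : {set T}) (F : {set {set T}}),
      F \subset edges g -> (forall e, e \in F -> e \subset S) ->
      (3 <= #|S|)%N -> (#|F|%:R : R) <= k * (#|S|%:R - 2))%R ->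
  interval_colouring g c ->
  forall n p q, q - p < n -> good k g c p q.
Proof.
move=> k0 Hd Hic; elim=> [//|n IH] p q Hn.
apply: step => // p' q' H'; apply: IH; lia.
Qed.

Lemma num_coloursE (T : finType) (g : rel T) (c : {set T} -> nat) :
  num_colours g c = #|Cs g c 0 (Bnd g c)|.
Proof.
rewrite /num_colours.
have -> : [seq c e | e <- enum (edges g)] = [seq val i | i <- [seq col g c e | e <- enum (edges g)]].
  rewrite -map_comp; apply/eq_in_map => e; rewrite mem_enum => E /=.
  by rewrite col_val.
rewrite undup_map_inj; last exact: val_inj.
rewrite size_map -(card_uniqP (undup_uniq _)).
apply: eq_card => i; rewrite mem_undup inE /= ltnW ?ltn_ord // andbT.
apply/mapP/existsP.
- by case=> e; rewrite mem_enum => E ->; exists e; rewrite E eqxx.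
- by case=> e /andP [E /eqP <-]; exists e; rewrite ?mem_enum.
Qed.

Local Open Scope ring_scope.

Theorem theorem4 (R : realType) (k : R) (T : finType) (g : rel T) :
  simple_graph g -> 0 <= k -> (2 <= #|T|)%N ->
  (forall (S : {set T}) (F : {set {set T}}),
      F \subset edges g -> (forall e, e \in F -> e \subset S) ->
      (3 <= #|S|)%N -> (#|F|%:R : R) <= k * (#|S|%:R - 2)) ->
  forall c : {set T} -> nat, interval_colouring g c ->
    ((num_colours g c)%:R : R) <= k / 2 * (#|T|%:R) + 1 - k.
Proof.
move=> _ k0 HT Hd c Hic.
have HX : 0 <= k * (#|T|%:R - 2).
  by apply: mulr_ge0 => //; rewrite subr_ge0 (ler_nat R 2).
have -> : k / 2 * #|T|%:R + 1 - k = (k * (#|T|%:R - 2)) / 2 + 1 by field.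
rewrite num_coloursE.
have Hg := @main_ind R k T g c k0 Hd Hic (Bnd g c).+1 0 (Bnd g c) ltac:(lia).
case: (posnP #|Cs g c 0 (Bnd g c)|) => [->|Hp].
  move: HX; set X := k * _; move=> HX; lra.
have H1 := Hg Hp.
have H2 : k * (#|Vw g c 0 (Bnd g c)|%:R - 2) <= k * (#|T|%:R - 2).
  by apply: ler_wpM2l => //; rewrite lerD2r ler_nat max_card.
move: H1 H2; set X := k * (#|T|%:R - 2); set Y := k * _; set t := (#|Cs _ _ _ _|%:R).
move=> H1 H2; lra.
Qed.
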